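(* Let $(X,E,\ell)$ be a weighted tree with similarity matrix $Z=(e^{-d(x,y)})_{x,y\in X}$. Then $Z$ is invertible and for $x,y\in X$ with $x\neq y$: $$Z^{-1}(x,x)=1+\sum_{e\ni x}\frac{e^{-2\ell(e)}}{1-e^{-2\ell(e)}},$$ $Z^{-1}(x,y)=0$ if $x$ and $y$ are not adjacent, and if $e=\{x,y\}\in E$, $$Z^{-1}(x,y)=-\frac{e^{-\ell(e)}}{1-e^{-2\ell(e)}}.$$
   Context: A weighted tree is a triple $(X,E,\ell)$ where $(X,E)$ is a finite simple undirected graph that is a tree, and $\ell\colon E\to(0,\infty)$ assigns lengths to edges. Its vertex set $X$ is a metric space with $d(x,y)$ the total length of the unique simple path from $x$ to $y$. The sum $\sum_{e\ni x}$ is over edges containing $x$. *)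

(* Defs.v *)
From HB Require Import structures.
From mathcomp Require Import all_boot all_order all_algebra.
From mathcomp Require Import reals.
From mathcomp Require Import sequences.
From mathcomp.analysis Require Import exp.
Set Implicit Arguments. Unset Strict Implicit. Unset Printing Implicit Defensive.
Import Order.TTheory GRing.Theory Num.Theory.
Local Open Scope ring_scope.

Definition simple_graph (T : finType) (adj : rel T) : Prop :=
  symmetric adj /\ irreflexive adj.

Definition upath (T : finType) (adj : rel T) (x : T) (p : seq T) (y : T) : bool :=
  [&& path adj x p, uniq (x :: p) & last x p == y].

(* A cycle: at least 3 distinct vertices x :: p, consecutive ones adjacent,
   and the last adjacent to x. *)
Definition has_cycle (T : finType) (adj : rel T) : Prop :=
  exists (x : T) (p : seq T),
    [&& (2 <= size p)%N, path adj x p, uniq (x :: p) & adj (last x p) x].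

Definition connected_graph (T : finType) (adj : rel T) : Prop :=
  forall x y : T, exists p, upath adj x p y.

Definition is_tree (T : finType) (adj : rel T) : Prop :=
  [/\ simple_graph adj, connected_graph adj & ~ has_cycle adj].

Fixpoint path_len (T : Type) (R : nmodType) (len : T -> T -> R) (x : T)
    (p : seq T) : R :=
  match p with
  | [::] => 0
  | y :: p' => len x y + path_len len y p'
  end.

(* Main.v *)
Require Import Defs.
From HB Require Import structures.
From mathcomp Require Import all_boot all_order all_algebra.
From mathcomp Require Import reals.
From mathcomp Require Import sequences.
From mathcomp.analysis Require Import exp.
From mathcomp Require Import ring lra.
Import Order.TTheory GRing.Theory Num.Theory.
Local Open Scope ring_scope.

Lemma path_len_rcons (R : realType) (T : Type) (len : T -> T -> R) x p c :
  path_len len x (rcons p c) = path_len len x p + len (last x p) c.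
Proof. elim: p x => [|a p IH] x /=; first by rewrite addr0 add0r. by rewrite IH addrA. Qed.

Lemma no_back (T : finType) (adj : rel T) : symmetric adj -> ~ has_cycle adj ->
  forall x p1 z y, path adj x p1 -> uniq (x :: rcons p1 z) -> adj (last x p1) z ->
  adj z y -> y != last x p1 -> y \notin x :: p1.
Proof.
move=> adjS acyc x p1 z y pp up awz azy yw; apply/negP => yin.
move: pp up awz yw; case/splitPl: yin => q1 q2 lq1.
rewrite cat_path last_cat lq1 => /andP[_ pq2] up awz yw.
apply: acyc; exists y, (rcons q2 z).
rewrite size_rcons rcons_path pq2 awz last_rcons azy /= andbT.
move: up; rewrite rcons_cat -cat_cons cat_uniq => /and3P[_ hn ->].
rewrite andbT; apply/andP; split.
  by case: q2 pq2 awz yw {hn} => [|a q2] //= _ _; rewrite eqxx.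
apply/negP => yq; move/hasPn: hn => /(_ y yq) /=; rewrite -lq1 mem_last.
by [].
Qed.

Lemma tree_nbr (R : realType) (T : finType) (adj : rel T) (len : T -> T -> R)
  (d : T -> T -> R) :
  is_tree adj -> (forall x y, len x y = len y x) ->
  (forall x y p, upath adj x p y -> d x y = path_len len x p) ->
  forall x z, x != z -> exists2 w, adj z w &
     d x z = d x w + len z w /\
     forall y, adj z y -> y != w -> d x y = d x z + len z y.
Proof.
move=> [[adjS adjI] conn acyc] lenS dP x z xz.
have [p /and3P [pp up lp]] := conn x z.
case/lastP: p pp up lp => [|p1 c] pp up lp.
  by move: lp xz => /= /eqP ->; rewrite eqxx.
rewrite last_rcons in lp; move/eqP: lp => ?; subst c.
have up' := up.
rewrite rcons_path in pp; case/andP: pp => pp1 awz.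
rewrite -rcons_cons rcons_uniq in up; case/andP: up => znin up1.
have dw : d x (last x p1) = path_len len x p1 by apply: dP; rewrite /upath pp1 up1 eqxx.
have dz0 : d x z = path_len len x (rcons p1 z).
  by apply: dP; rewrite /upath rcons_path pp1 awz up' last_rcons eqxx.
have dz : d x z = d x (last x p1) + len z (last x p1).
  by rewrite dz0 path_len_rcons dw lenS.
exists (last x p1); first by rewrite adjS.
split => // y zy yw.
have yz : y != z by apply: contraTneq zy => ->; rewrite adjI.
have ynin := @no_back T adj adjS acyc _ _ _ _ pp1 up' awz zy yw.
rewrite (dP x y (rcons (rcons p1 z) y)); last first.
  rewrite /upath rcons_path last_rcons rcons_path pp1 awz zy /=.
  rewrite last_rcons eqxx andbT.
  change (uniq (x :: rcons (rcons p1 z) y)).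
  rewrite -rcons_cons rcons_uniq up' andbT -rcons_cons mem_rcons inE negb_or yz.
  exact: ynin.
by rewrite path_len_rcons last_rcons dz0.
Qed.

Theorem proposition4p1 (R : realType) (n : nat) (adj : rel 'I_n)
    (len : 'I_n -> 'I_n -> R) (d : 'I_n -> 'I_n -> R) :
  is_tree adj ->
  (forall x y, len x y = len y x) ->
  (forall x y, adj x y -> 0 < len x y) ->
  (forall x y p, upath adj x p y -> d x y = path_len len x p) ->
  let Z := \matrix_(i, j) expR (- d i j) in
  Z \in unitmx /\
  (forall x, invmx Z x x =
     1 + \sum_(y | adj x y)
           expR (-2 * len x y) / (1 - expR (-2 * len x y))) /\
  (forall x y, x != y -> ~~ adj x y -> invmx Z x y = 0) /\
  (forall x y, adj x y ->
     invmx Z x y = - (expR (- len x y) / (1 - expR (-2 * len x y)))).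
Proof.
move=> tree lenS lenP dP Z.
have [[adjS adjI] _ _] := tree.
pose a (x y : 'I_n) := expR (-2 * len x y) / (1 - expR (-2 * len x y)).
pose b (x y : 'I_n) := expR (- len x y) / (1 - expR (-2 * len x y)).
pose M := \matrix_(i, j) (if i == j then 1 + \sum_(y | adj i y) a i y
   else if adj i j then - b i j else 0) : 'M[R]_n.
have e2 : forall l : R, expR (-2 * l) = expR (- l) ^+ 2.
  by move=> l; rewrite expr2 -expRD; congr expR; lra.
have q1 : forall x y, adj x y -> 1 - expR (- len x y) ^+ 2 != 0.
  move=> x y /lenP lp; have h1 : expR (- len x y) < 1 by rewrite expR_lt1 oppr_lt0.
  have h0 := expR_gt0 (- len x y).
  rewrite subr_eq0 eq_sym; apply/negP => /eqP h; nra.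
have ZM : Z *m M = 1%:M.
  apply/matrixP => x z; rewrite !mxE (bigD1 z) //= !mxE eqxx.
  have E : \sum_(j | j != z) Z x j * M j z =
      \sum_(j | adj z j) expR (- d x j) * - b z j.
    rewrite big_mkcond [RHS]big_mkcond; apply: eq_bigr => j _.
    case: eqVneq => [->|jz] /=; first by rewrite adjI.
    rewrite !mxE (negbTE jz) (adjS j z); case: (adj z j); last by rewrite mulr0.
    by rewrite /b [len j z]lenS.
  rewrite E mulrDr mulr1 big_distrr /= -addrA -big_split /=.
  case: eqVneq => [<-|xz].
    have d0 : d x x = 0 by rewrite (dP x x [::]) // /upath /= eqxx.
    rewrite d0 oppr0 expR0 big1 ?addr0 // => y xy; rewrite mul1r.
    have dy : d x y = len x y.
      have xny : x != y by apply: contraTneq xy => ->; rewrite adjI.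
      by rewrite (dP x y [:: y]) /= ?addr0 // /upath /= xy !inE xny eqxx.
    rewrite dy /a /b e2; have := q1 _ _ xy; move: (expR _) => q qn.
    by field.
  have [w zw [dz oth]] := @tree_nbr R _ adj len d tree lenS dP x z xz.
  rewrite (bigD1 w) // big1 /= ?addr0; last first.
    move=> y /andP [zy yw]; rewrite (oth y zy yw) /a /b e2.
    rewrite opprD expRD; have := q1 _ _ zy; move: (expR (- len z y)) (expR (- d x z)) => q r qn.
    by field.
  rewrite dz /a /b e2 opprD expRD; have := q1 _ _ zw.
  move: (expR (- len z w)) (expR (- d x w)) => q r qn.
  by field.
have [Zu _] := mulmx1_unit ZM.
have iZ : invmx Z = M by rewrite -[invmx Z]mulmx1 -ZM mulmxA mulVmx // mul1mx.
rewrite iZ; split => //; split; [move=> x|split; [move=> x y xy nxy|move=> x y xy]].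
- by rewrite !mxE eqxx.
- by rewrite !mxE (negbTE xy) (negbTE nxy).
- have xny : x != y by apply: contraTneq xy => ->; rewrite adjI.
  by rewrite !mxE (negbTE xny) xy.
Qed.
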